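(* Let $(J,\mathcal F)$, coefficients $b^S,w^S_j$, and $P(\mathcal F)$ be as in the context, with $P(\mathcal F)$ an $\mathcal F$-extended polymatroid. Let $\mathbf c\in\mathbb R^J$ and let algorithm $\mathrm{AG}_1$ on input $\mathbf c$ output $\boldsymbol\pi=(\pi_1,\dots,\pi_n)$ and $\boldsymbol\nu$; put $S_k=\{\pi_k,\dots,\pi_n\}$. (a) For every $\mathbf x\in\mathbb R^J$, $$\sum_{j\in J}c_jx_j=\nu_{\pi_1}\sum_{j\in S_1}w^{S_1}_jx_j+\sum_{k=2}^n(\nu_{\pi_k}-\nu_{\pi_{k-1}})\sum_{j\in S_k}w^{S_k}_jx_j,$$ and $\sum_{j\in J}c_jx^{\boldsymbol\pi}_j=\nu_{\pi_1}b^{S_1}+\sum_{k=2}^n(\nu_{\pi_k}-\nu_{\pi_{k-1}})b^{S_k}$. (b) If $\nu_{\pi_1}\le\nu_{\pi_2}\le\cdots\le\nu_{\pi_n}$, then $\mathbf x^{\boldsymbol\pi}$ and $\mathbf y^{\boldsymbol\pi}$ form an optimal primal-dual pair for the LP $\min\{\sum_jc_jx_j:\mathbf x\in P(\mathcal F)\}$ and its dual, and the optimal value is $\nu_{\pi_1}b^{S_1}+\sum_{k=2}^n(\nu_{\pi_k}-\nu_{\pi_{k-1}})b^{S_k}$.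
   Context: $J$ is a finite set, $|J|=n$; $\mathcal F\subseteq2^J$ with $\emptyset\in\mathcal F$, every nonempty $S\in\mathcal F$ having nonempty inner boundary $\partial^-S=\{j\in S:S\setminus\{j\}\in\mathcal F\}$, and every $S\in\mathcal F$, $S\ne J$, having some $j\in J\setminus S$ with $S\cup\{j\}\in\mathcal F$. A full $\mathcal F$-string is an ordering $\boldsymbol\pi=(\pi_1,\dots,\pi_n)$ of $J$ with $\{\pi_k,\dots,\pi_n\}\in\mathcal F$ for all $k$; $\Pi(\mathcal F)$ is the set of these. Given $b^S\ge0$ and $w^S_j>0$ for $j\in S\in\mathcal F$, $P(\mathcal F)=\{\mathbf x\in\mathbb R^J: \sum_{j\in S}w^S_jx_j\ge b^S\ (S\in\mathcal F\setminus\{J\}),\ \sum_{j\in J}w^J_jx_j=b^J,\ \mathbf x\ge0\}$. For $\boldsymbol\pi\in\Pi(\mathcal F)$, $\mathbf x^{\boldsymbol\pi}$ is the unique solution of $\sum_{l=k}^nw^{S_k}_{\pi_l}x_{\pi_l}=b^{S_k}$, $1\le k\le n$, where $S_k=\{\pi_k,\dots,\pi_n\}$. $P(\mathcal F)$ is an $\mathcal F$-extended polymatroid if $\mathbf x^{\boldsymbol\pi}\in P(\mathcal F)$ for all $\boldsymbol\pi\in\Pi(\mathcal F)$. The dual LP is $\max\{\sum_{S\in\mathcal F}b^Sy^S:\sum_{S:j\in S\in\mathcal F}w^S_jy^S\le c_j\ (j\in J),\ y^S\ge0\ (S\ne J),\ y^J\text{ free}\}$. Algorithm $\mathrm{AG}_1$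 on input $\mathbf c$: $S_1=J$, $y^{S_1}=\min\{c_j/w^{S_1}_j:j\in\partial^-S_1\}$, $\pi_1$ a minimizer, $\nu_{\pi_1}=y^{S_1}$; for $k=2,\dots,n$: $S_k=S_{k-1}\setminus\{\pi_{k-1}\}$, $y^{S_k}=\min\{(c_j-\sum_{l=1}^{k-1}y^{S_l}w^{S_l}_j)/w^{S_k}_j:j\in\partial^-S_k\}$, $\pi_k$ a minimizer, $\nu_{\pi_k}=\nu_{\pi_{k-1}}+y^{S_k}$. Define $\mathbf y^{\boldsymbol\pi}=(y^{\boldsymbol\pi,S})_{S\in\mathcal F}$ by $y^{\boldsymbol\pi,S_1}=\nu_{\pi_1}$, $y^{\boldsymbol\pi,S_k}=\nu_{\pi_k}-\nu_{\pi_{k-1}}$ for $2\le k\le n$, and $y^{\boldsymbol\pi,S}=0$ for all other $S\in\mathcal F$. *)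

(* Defs.v *)
From mathcomp Require Import all_boot all_order all_algebra.
Set Implicit Arguments. Unset Strict Implicit. Unset Printing Implicit Defensive.
Import Order.TTheory GRing.Theory Num.Theory.
Local Open Scope ring_scope.

Section Defs.
Variables (R : realFieldType) (J : finType).

Definition inner_boundary (F : {set {set J}}) (S : {set J}) : {set J} :=
  [set j in S | S :\ j \in F].

Definition good_family (F : {set {set J}}) : Prop :=
  [/\ set0 \in F,
      (forall S, S \in F -> S != set0 -> inner_boundary F S != set0) &
      (forall S, S \in F -> S != setT ->
         exists2 j, j \notin S & j |: S \in F)].

Definition good_coeffs (F : {set {set J}}) (b : {set J} -> R)
    (w : {set J} -> J -> R) : Prop :=
  forall S, S \in F -> 0 <= b S /\ (forall j, j \in S -> 0 < w S j).

(* An ordering pi_1, ..., pi_n of J is encoded (0-based) as pi : nat -> J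
   such that pi 0, ..., pi (n-1) enumerate J (values beyond n are irrelevant). *)
Definition is_ordering (pi : nat -> J) : Prop :=
  [set pi (val i) | i : 'I_#|J|] = [set: J].

(* S_k = {pi_k, ..., pi_n} (0-based: {pi k, ..., pi (n-1)}). *)
Definition Sk (pi : nat -> J) (k : nat) : {set J} :=
  [set pi (val i) | i : 'I_#|J| & (k <= val i)%N].

Definition full_string (F : {set {set J}}) (pi : nat -> J) : Prop :=
  is_ordering pi /\ forall k, (k < #|J|)%N -> Sk pi k \in F.

Definition inP (F : {set {set J}}) (b : {set J} -> R) (w : {set J} -> J -> R)
    (x : J -> R) : Prop :=
  [/\ (forall S, S \in F -> S != setT -> b S <= \sum_(j in S) w S j * x j),
      \sum_(j in [set: J]) w setT j * x j = b setT &
      (forall j, 0 <= x j)].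

(* x solves the triangular system defining x^pi (it has a unique solution). *)
Definition is_xpi (b : {set J} -> R) (w : {set J} -> J -> R)
    (pi : nat -> J) (x : J -> R) : Prop :=
  forall k, (k < #|J|)%N -> \sum_(j in Sk pi k) w (Sk pi k) j * x j = b (Sk pi k).

Definition ext_polymatroid (F : {set {set J}}) (b : {set J} -> R)
    (w : {set J} -> J -> R) : Prop :=
  forall pi, full_string F pi -> forall x, is_xpi b w pi x -> inP F b w x.

(* Step value y^{S_k}: nu_{pi_1} for the first step, nu_{pi_k} - nu_{pi_{k-1}}
   otherwise (0-based k). *)
Definition ystep (pi : nat -> J) (nu : J -> R) (k : nat) : R :=
  if k is k'.+1 then nu (pi k) - nu (pi k') else nu (pi 0%N).

Definition AG1 (F : {set {set J}}) (w : {set J} -> J -> R) (c : J -> R)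
    (pi : nat -> J) (nu : J -> R) : Prop :=
  is_ordering pi /\
  forall k, (k < #|J|)%N ->
    let S := Sk pi k in
    let r := fun j => (c j - \sum_(l < k) ystep pi nu l * w (Sk pi l) j) / w S j in
    [/\ pi k \in inner_boundary F S,
        ystep pi nu k = r (pi k) &
        (forall j, j \in inner_boundary F S -> ystep pi nu k <= r j)].

Definition ypi (pi : nat -> J) (nu : J -> R) (S : {set J}) : R :=
  \sum_(k < #|J| | Sk pi k == S) ystep pi nu k.

Definition primal_obj (c x : J -> R) : R := \sum_(j in [set: J]) c j * x j.

Definition primal_optimal F b w (c x : J -> R) : Prop :=
  inP F b w x /\ forall x', inP F b w x' -> primal_obj c x <= primal_obj c x'.

Definition dual_feasible (F : {set {set J}}) (w : {set J} -> J -> R)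
    (c : J -> R) (y : {set J} -> R) : Prop :=
  (forall j, \sum_(S in F | j \in S) w S j * y S <= c j) /\
  (forall S, S \in F -> S != setT -> 0 <= y S).

Definition dual_obj (F : {set {set J}}) (b : {set J} -> R) (y : {set J} -> R) : R :=
  \sum_(S in F) b S * y S.

Definition dual_optimal F b w c (y : {set J} -> R) : Prop :=
  dual_feasible F w c y /\
  forall y', dual_feasible F w c y' -> dual_obj F b y' <= dual_obj F b y.

End Defs.

(* Main.v *)
Require Import Defs.
From mathcomp Require Import all_boot all_order all_algebra ring.
Import Order.TTheory GRing.Theory Num.Theory.
Local Open Scope ring_scope.

Lemma ord_inj {J : finType} { pi : nat -> J } : is_ordering pi ->
  injective (fun i : 'I_#|J| => pi (val i)).
Proof.
move=> H.
have: #|[set pi (val i) | i : 'I_#|J|]| == #|'I_#|J| |.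
  by rewrite H !cardsT card_ord.
move/imset_injP => Hi i j Hij; exact: Hi.
Qed.

Lemma ord_surj {J : finType} { pi : nat -> J } : is_ordering pi ->
  forall j, exists i : 'I_#|J|, j = pi (val i).
Proof.
move=> H j; have : j \in [set: J] by rewrite inE.
by rewrite -H => /imsetP [i _ ->]; exists i.
Qed.

Lemma mem_Sk {J : finType} { pi : nat -> J } : is_ordering pi ->
  forall k (i : 'I_#|J|), (pi (val i) \in Sk pi k) = (k <= val i)%N.
Proof.
move=> H k i; apply/imsetP/idP.
  by case=> i' Hi' /(ord_inj H) ->; move: Hi'; rewrite inE.
by move=> Hk; exists i => //; rewrite inE.
Qed.

Lemma sum_Sk (R : realFieldType) {J : finType} { pi : nat -> J } (G : J -> R) k :
  is_ordering pi ->
  \sum_(j in Sk pi k) G j = \sum_(i < #|J| | (k <= i)%N) G (pi i).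
Proof.
move=> H; rewrite big_imset /=; last by move=> i j _ _; apply: ord_inj.
by apply: eq_bigl => i; rewrite inE.
Qed.

Lemma sum_T (R : realFieldType) {J : finType} { pi : nat -> J } (G : J -> R) :
  is_ordering pi ->
  \sum_(j in [set: J]) G j = \sum_(i < #|J|) G (pi i).
Proof.
move=> H; rewrite -{1}H big_imset /=; last by move=> i j _ _; apply: ord_inj.
by apply: eq_bigl => i; rewrite inE.
Qed.

Lemma Sk0 {J : finType} { pi : nat -> J } : is_ordering pi -> Sk pi 0 = setT.
Proof.
move=> H; apply/setP => j; rewrite inE; have [i ->] := ord_surj H j.
by rewrite mem_Sk.
Qed.

Lemma SkS {J : finType} { pi : nat -> J } k : is_ordering pi -> (k < #|J|)%N ->
  Sk pi k :\ pi k = Sk pi k.+1.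
Proof.
move=> H Hk; apply/setP => j; have [i ->] := ord_surj H j.
rewrite !inE !mem_Sk //.
have -> : (pi i == pi k) = (i == Ordinal Hk :> 'I_#|J|).
  by apply/eqP/eqP => [Hp|->//]; apply: (ord_inj H); exact: Hp.
rewrite -val_eqE /= ltn_neqAle eq_sym.
by case: (k == i).
Qed.

Lemma setT_in {J : finType} (F : {set {set J}}) : good_family F -> setT \in F.
Proof.
case=> H0 _ H2.
have [S SF Smax] := @arg_maxnP _ set0 (fun S => S \in F) (fun S => #|S|) H0.
apply: contraT => HT.
have SnT : S != setT by apply: contraNneq HT => <-.
have [j jS jF] := H2 S SF SnT.
have := Smax _ jF; rewrite cardsU1 jS add1n => HH; have HH' : (#|S| < #|S|)%N := HH; by rewrite ltnn in HH'.
Qed.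

Lemma SkF {R : realFieldType} {J : finType} {F : {set {set J}}} {w : {set J} -> J -> R}
  {c : J -> R} { pi : nat -> J } {nu : J -> R} :
  good_family F -> AG1 F w c pi nu -> forall k, (k < #|J|)%N -> Sk pi k \in F.
Proof.
move=> HF [Ho HA]; elim=> [|k IH] Hk.
  by rewrite Sk0 //; apply: setT_in.
have Hk' : (k < #|J|)%N by apply: ltnW.
have [Hb _ _] := HA k Hk'.
move: Hb; rewrite inE => /andP [_]; by rewrite SkS.
Qed.

Lemma c_eq {R : realFieldType} {J : finType} {F : {set {set J}}} {b : {set J} -> R}
  {w : {set J} -> J -> R}
  {c : J -> R} { pi : nat -> J } {nu : J -> R} :
  good_family F -> good_coeffs F b w -> AG1 F w c pi nu -> forall m : 'I_#|J|,
  c (pi m) = \sum_(k < #|J| | (k <= m)%N) ystep pi nu k * w (Sk pi k) (pi m).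
Proof.
move=> HF Hc HA m; have HSF := SkF HF HA; case: HA => Ho HA.
have [_ Hy _] := HA m (ltn_ord m).
have Hw : 0 < w (Sk pi m) (pi m).
  by have [_ ->] := Hc _ (HSF m (ltn_ord m)); rewrite // mem_Sk.
rewrite -(big_ord_widen _ (fun k => ystep pi nu k * w (Sk pi k) (pi m)) (ltn_ord m)).
rewrite big_ord_recr /= Hy divfK ?(gt_eqF Hw) //.
by rewrite addrC subrK.
Qed.

Lemma part_a {R : realFieldType} {J : finType} {F : {set {set J}}} {b : {set J} -> R}
  {w : {set J} -> J -> R}
  {c : J -> R} { pi : nat -> J } {nu : J -> R} :
  good_family F -> good_coeffs F b w -> AG1 F w c pi nu -> forall x : J -> R,
      \sum_(j in [set: J]) c j * x j =
      \sum_(k < #|J|) ystep pi nu k * \sum_(j in Sk pi k) w (Sk pi k) j * x j.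
Proof.
move=> HF Hc HA x; have Ho := HA.1.
rewrite (sum_T _ _ Ho).
under eq_bigr => m _ do rewrite (c_eq HF Hc HA m) big_distrl big_mkcond /=.
under [RHS]eq_bigr => k _ do rewrite (sum_Sk _ _ _ Ho) big_distrr big_mkcond /=.
rewrite exchange_big /=; apply: eq_bigr => m _; apply: eq_bigr => k _.
by case: ifP => // _; rewrite mulrA.
Qed.

Lemma sum_ypi {R : realFieldType} {J : finType} {F : {set {set J}}} { pi : nat -> J }
  {nu : J -> R} (G : {set J} -> R) (P : pred {set J}) :
  (forall k, (k < #|J|)%N -> Sk pi k \in F) ->
  \sum_(S | (S \in F) && P S) G S * ypi pi nu S =
  \sum_(k < #|J| | P (Sk pi k)) G (Sk pi k) * ystep pi nu k.
Proof.
move=> HSF.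
under eq_bigr => S _ do rewrite /ypi big_distrr big_mkcond /=.
rewrite exchange_big /= [RHS]big_mkcond /=; apply: eq_bigr => k _.
rewrite big_mkcond /= (bigD1 (Sk pi k)) //= eqxx (HSF k (ltn_ord k)) /= big1 ?addr0 //.
move=> S HS; rewrite eq_sym (negbTE HS); by case: ifP.
Qed.

Theorem theorem1 (R : realFieldType) (J : finType) (F : {set {set J}})
    (b : {set J} -> R) (w : {set J} -> J -> R) (c : J -> R)
    (pi : nat -> J) (nu : J -> R) :
  good_family F -> good_coeffs F b w -> ext_polymatroid F b w ->
  AG1 F w c pi nu ->
  (* (a) *)
  ((forall x : J -> R,
      \sum_(j in [set: J]) c j * x j =
      \sum_(k < #|J|) ystep pi nu k * \sum_(j in Sk pi k) w (Sk pi k) j * x j) /\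
   (forall x : J -> R, is_xpi b w pi x ->
      \sum_(j in [set: J]) c j * x j =
      \sum_(k < #|J|) ystep pi nu k * b (Sk pi k))) /\
  (* (b) *)
  ((forall k, (k.+1 < #|J|)%N -> nu (pi k) <= nu (pi k.+1)) ->
   forall x : J -> R, is_xpi b w pi x ->
     [/\ primal_optimal F b w c x,
         dual_optimal F b w c (ypi pi nu),
         primal_obj c x = dual_obj F b (ypi pi nu) &
         primal_obj c x = \sum_(k < #|J|) ystep pi nu k * b (Sk pi k)]).
Proof.
move=> HF Hc Hpm HA; have Ho := HA.1; have HSF := SkF HF HA.
have Ha := part_a HF Hc HA.
have Ha2 : forall x, is_xpi b w pi x -> \sum_(j in [set: J]) c j * x j =
    \sum_(k < #|J|) ystep pi nu k * b (Sk pi k).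
  move=> x Hx; rewrite Ha; apply: eq_bigr => k _; by rewrite Hx.
split; first by split.
move=> Hmono x Hx.
have Hfs : full_string F pi by split.
have HxP := Hpm pi Hfs x Hx.
have Hy0 : forall k : 'I_#|J|, (0 < k)%N -> 0 <= ystep pi nu k.
  move=> [[|k] Hk] //= _; rewrite subr_ge0; exact: Hmono.
have HST : Sk pi 0 = setT := Sk0 Ho.
have HnT : forall k : 'I_#|J|, (0 < k)%N -> Sk pi k != setT.
  move=> k Hk; apply/negP => /eqP E.
  pose i0 : 'I_#|J| := Ordinal (leq_ltn_trans (leq0n k) (ltn_ord k)).
  have := mem_Sk Ho k i0; rewrite E inE /= => H; move: Hk; by rewrite ltnNge -H.
have Hdual : dual_obj F b (ypi pi nu) = \sum_(k < #|J|) ystep pi nu k * b (Sk pi k).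
  rewrite /dual_obj (eq_bigl (fun S => (S \in F) && xpredT S)); last first.
    by move=> S; rewrite andbT.
  rewrite (sum_ypi b xpredT HSF); apply: eq_bigr => k _; by rewrite mulrC.
have Hpo : primal_optimal F b w c x.
  split; first exact: HxP.
  move=> x' Hx'; rewrite /primal_obj Ha2 // Ha; apply: ler_sum => k _.
  have [k0|kpos] := posnP k.
    by case: Hx' => _ HT _; rewrite k0 HST HT.
  apply: ler_wpM2l; first exact: Hy0.
  case: Hx' => H1 _ _; apply: H1; [exact: HSF | exact: HnT].
split => //; last by rewrite /primal_obj (Ha2 x Hx).
- split.
  + split.
    * move=> j; have [m ->] := ord_surj Ho j.
      have := sum_ypi (nu := nu) (fun S => w S (pi m)) (fun S => pi m \in S) HSF.
      move=> /= ->; rewrite (c_eq HF Hc HA m) le_eqVlt; apply/orP; left; apply/eqP.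
      apply: eq_big => k; first by rewrite mem_Sk.
      by move=> _; rewrite mulrC.
    * move=> S SF SnT; rewrite /ypi; apply: sumr_ge0 => k /eqP Ek.
      have [k0|kpos] := posnP k; last exact: Hy0.
      by move: SnT; rewrite -Ek k0 HST eqxx.
  + move=> y' [Hf Hnn]; rewrite Hdual -(Ha2 x Hx); rewrite /dual_obj.
    apply: (le_trans (y := \sum_(S in F) y' S * \sum_(j in S) w S j * x j)).
      apply: ler_sum => S SF; case: (eqVneq S setT) => [->|SnT].
        by case: HxP => _ -> _; rewrite mulrC.
      rewrite mulrC; apply: ler_wpM2l; first exact: Hnn.
      by case: HxP => H1 _ _; apply: H1.
    under eq_bigr => S _ do rewrite big_distrr big_mkcond /=.
    rewrite exchange_big /=.
    rewrite [X in _ <= X](eq_bigl xpredT); last by move=> j; rewrite inE.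
    apply: ler_sum => j _; rewrite -big_mkcondr /=.
    apply: (le_trans (y := x j * \sum_(S in F | j \in S) w S j * y' S)).
      rewrite big_distrr /= le_eqVlt; apply/orP; left; apply/eqP.
      by apply: eq_bigr => S _; ring.
    rewrite mulrC; apply: ler_wpM2r; last exact: Hf.
    by case: HxP.
- by rewrite /primal_obj (Ha2 x Hx) Hdual.
Qed.
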